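(* Let $\Omega$, $\mu$, $w$, $\alpha$ and $T_{\alpha,w,\infty}$ be as in the context, and let $F\subseteq\Omega$ be a Borel set with $0<\mu(F)<\infty$. Suppose there is $N>0$ such that $\alpha^n(F)\cap F=\varnothing$ for all $n\geq N$ and $$\beta:=\inf\Big\{\prod_{k=1}^n(w\circ\alpha^{-k})(t):\ n\geq N,\ t\in F\Big\}\neq0.$$ Then the set $$\{f\in L^\infty(\Omega,\mu):\ \|T^n_{\alpha,w,\infty}f-\chi_F\|_\infty\geq1\ \text{ for all } n\geq N\}$$ is not $\sigma$-porous in $L^\infty(\Omega,\mu)$.
   Context: $\Omega$ is a locally compact Hausdorff space with a nonnegative Radon measure $\mu$; $w:\Omega\to(0,\infty)$ is a bounded measurable function; $\alpha:\Omega\to\Omega$ is a bijective bi-measurable map such that $\|f\circ\alpha\|_\infty=\|f\circ\alpha^{-1}\|_\infty=\|f\|_\infty$ for all $f\in L^\infty(\Omega,\mu)$. Here $\alpha^{-1}$ is the inverse map, $\alpha^{-k}:=(\alpha^{-1})^k$, $\alpha^k$ is the $k$-fold iterate. $T_{\alpha,w,\infty}:L^\infty(\Omega,\mu)\to L^\infty(\Omega,\mu)$ is $T_{\alpha,w,\infty}f:=w\cdot(f\circ\alpha)$. Porosity: Let $X$ be a metric space and $0<\lambda<1$. A set $E\subseteq X$ is $\lambda$-porous at $x\in E$ if for each $\delta>0$ there is $y\in B(x;\delta)\setminus\{x\}$ with $B(y;\lambda\, d(x,y))\cap E=\varnothing$; $E$ is $\lambda$-porous if it is $\lambda$-porous at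 each of its points; $E$ is $\sigma$-$\lambda$-porous if it is a countable union of $\lambda$-porous subsets of $X$. A set is called $\sigma$-porous if it is $\sigma$-$\lambda$-porous for some $\lambda\in(0,1)$; ''not $\sigma$-porous'' means not $\sigma$-$\lambda$-porous for any $\lambda\in(0,1)$. *)

(* Defs.v *)
From HB Require Import structures.
From mathcomp Require Import all_boot all_order all_algebra.
From mathcomp Require Import all_classical all_reals all_analysis.
From mathcomp Require Import ess_sup_inf.
Set Implicit Arguments. Unset Strict Implicit. Unset Printing Implicit Defensive.
Import Order.TTheory GRing.Theory Num.Theory Num.Def.
Import numFieldNormedType.Exports.
Local Open Scope classical_set_scope.
Local Open Scope ring_scope.

Notation borelT T := (g_sigma_algebraType (@open T)).

Definition radon_measure (T : ptopologicalType) (R : realType)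
  (mu : {measure set (borelT T) -> \bar R}) : Prop :=
  [/\ (forall K : set T, compact K -> (mu K < +oo)%E),
      (forall E : set (borelT T), measurable E ->
          mu E = ereal_inf [set mu U | U in [set U : set T | open U /\ E `<=` U]]) &
      (forall U : set T, open U ->
          mu U = ereal_sup [set mu K | K in [set K : set T | compact K /\ K `<=` U]])].

Section Linf.
Variables (T : ptopologicalType) (R : realType).
Variable mu : {measure set (borelT T) -> \bar R}.

Definition Linf_norm (f : borelT T -> R) : \bar R := ess_sup mu (EFin \o (normr \o f)).

(* L^oo(Omega, mu): measurable essentially bounded real functions
   (represented by functions; L^oo is their quotient by a.e. equality). *)
Definition Linf : set (borelT T -> R) :=
  [set f | measurable_fun setT f /\ (Linf_norm f < +oo)%E].

Definition Linf_dist (f g : borelT T -> R) : \bar R := Linf_norm (f \- g).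
End Linf.

Definition wcomp (T : Type) (R : pzRingType) (alpha : T -> T) (w : T -> R)
  (f : T -> R) : T -> R := fun x => w x * f (alpha x).

(* Points at distance 0 are identified (they are the same element of the
   metric quotient), so "y <> x" reads "0 < d x y". *)
Section Porosity.
Variables (V : Type) (R : realType) (X : set V) (d : V -> V -> \bar R).

Definition porous_at (lam : R) (E : set V) (x : V) : Prop :=
  forall delta : R, 0 < delta ->
    exists y, X y /\ (0 < d x y)%E /\ (d x y < delta%:E)%E /\
      (forall z, X z -> (d y z < lam%:E * d x y)%E -> ~ E z).

Definition lam_porous (lam : R) (E : set V) : Prop :=
  E `<=` X /\ forall x, E x -> porous_at lam E x.

Definition sigma_lam_porous (lam : R) (E : set V) : Prop :=
  exists Es : nat -> set V, (forall i, lam_porous lam (Es i)) /\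
    E = \bigcup_i Es i.

Definition sigma_porous (E : set V) : Prop :=
  exists lam : R, 0 < lam < 1 /\ sigma_lam_porous lam E.
End Porosity.

(* Main.v *)
Require Import Defs.
From HB Require Import structures.
From mathcomp Require Import all_boot all_order all_algebra.
From mathcomp Require Import all_classical all_reals all_analysis.
From mathcomp Require Import ess_sup_inf.
From mathcomp Require Import lra.
Import Order.TTheory GRing.Theory Num.Theory Num.Def.
Import numFieldNormedType.Exports.
Local Open Scope classical_set_scope.
Local Open Scope ring_scope.

Section L.
Context (R : realType) (T : ptopologicalType) (mu : {measure set (borelT T) -> \bar R}).
Implicit Types f g h : borelT T -> R.

Lemma Ldist_sym f g : Linf_dist mu f g = Linf_dist mu g f.
Proof.
rewrite /Linf_dist /Linf_norm; congr ess_sup; apply/funext => x /=.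
by rewrite distrC.
Qed.

Lemma Ldist_tri f g h :
  (Linf_dist mu f h <= Linf_dist mu f g + Linf_dist mu g h)%E.
Proof.
rewrite /Linf_dist /Linf_norm.
have -> : (f \- h) = ((f \- g) \+ (g \- h))%R.
  by apply/funext => x /=; rewrite addrA subrK.
exact: ess_sup_normD.
Qed.

Lemma Lnorm_ge0 f : (0 < mu setT)%E -> (0 <= Linf_norm mu f)%E.
Proof. by move=> mu0; apply: ess_sup_ger => // t /=; rewrite lee_fin. Qed.

Lemma Lnorm_opp f : Linf_norm mu (\- f) = Linf_norm mu f.
Proof.
rewrite /Linf_norm; congr ess_sup; apply/funext => x /=.
by rewrite normrN.
Qed.

Lemma Ldist_le f g : (Linf_dist mu f g <= Linf_norm mu f + Linf_norm mu g)%E.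
Proof.
rewrite /Linf_dist -(Lnorm_opp g).
exact: (ess_sup_normD mu f (\- g)).
Qed.

Lemma Ldist_fin f g : (0 < mu setT)%E -> Linf mu f -> Linf mu g ->
  Linf_dist mu f g = (fine (Linf_dist mu f g))%:E.
Proof.
move=> mu0 [_ hf] [_ hg]; rewrite fineK // ge0_fin_numE; last exact: Lnorm_ge0.
apply: le_lt_trans (Ldist_le f g) _.
by rewrite lte_add_pinfty.
Qed.

Lemma Ldist0 f : (0 < mu setT)%E -> Linf_dist mu f f = 0%E.
Proof.
move=> mu0; rewrite /Linf_dist /Linf_norm.
have -> : (normr \o (f \- f)) = cst 0.
  by apply/funext => x /=; rewrite subrr normr0.
exact: ess_sup_cstr.
Qed.


Lemma Linf_complete (c : nat -> (borelT T -> R)) (r : nat -> R) :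
  (0 < mu setT)%E ->
  (forall i, Linf mu (c i)) ->
  (forall i, 0 < r i) -> (forall e, 0 < e -> exists i, r i < e) ->
  (forall i j, (i <= j)%N -> (Linf_dist mu (c i) (c j) <= (r i)%:E)%E) ->
  exists f, Linf mu f /\ forall i, (Linf_dist mu (c i) f <= (r i)%:E)%E.
Proof.
move=> mu0 Lc r0 rcv dij.
have hae : \forall x \ae mu, forall i j, (i <= j)%N -> `|c i x - c j x| <= r i.
  apply: ae_foralln => i; apply: ae_foralln => j.
  have [ij|ji] := leqP i j; last by apply: nearW => x.
  have /ess_supP := dij i j ij.
  by apply: filterS => x /= h _; rewrite -lee_fin.
case: hae => N [mN N0 NP].
have good x : ~ N x -> forall i j, (i <= j)%N -> `|c i x - c j x| <= r i.
  by move=> Nx; apply: contra_notP Nx => /NP.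
pose g n := (c n \* \1_(~` N))%R.
have mg n : measurable_fun setT (g n).
  apply: measurable_realfun.measurable_funM; first exact: (Lc n).1.
  by apply: measurable_realfun.measurable_indic; exact: measurableC.
have gE x n : ~ N x -> g n x = c n x.
  by move=> Nx; rewrite /g /= indicE mem_set // mulr1.
have gN x n : N x -> g n x = 0.
  by move=> Nx; rewrite /g /= indicE memNset ?mulr0.
have cvgg x : cvg (g ^~ x @ \oo).
  have [Nx|Nx] := pselect (N x).
    have -> : g ^~ x = fun=> 0 by apply/funext => n; rewrite gN.
    by apply: is_cvg_cst.
  apply/cauchy_cvgP/cauchy_exP => e e0.
  have [i ri] := rcv e e0.
  exists (c i x); exists i => // n /= ni.
  rewrite gE // -ball_normE /=.
  by apply: le_lt_trans ri; apply: good.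
pose f x := lim (g ^~ x @ \oo).
have mf : measurable_fun setT f.
  apply: (measurable_realfun.measurable_fun_cvg (h := g)) => // x _.
have fb i x : ~ N x -> `|c i x - f x| <= r i.
  move=> Nx; rewrite ler_norml; apply/andP; split.
    rewrite lerBrDl -lerBrDr addrC; apply: limr_le; first exact: cvgg.
    exists i => // n /= ni; rewrite gE //.
    have := good x Nx i n ni; rewrite ler_norml => /andP[h _]; lra.
  rewrite lerBlDr -lerBlDl; apply: limr_ge; first exact: cvgg.
  exists i => // n /= ni; rewrite gE //.
  have := good x Nx i n ni; rewrite ler_norml => /andP[_ h]; lra.
have fd i : (Linf_dist mu (c i) f <= (r i)%:E)%E.
  apply/ess_supP; exists N; split => // x /= h; apply: contra_notP h => Nx.
  by rewrite lee_fin; apply: fb.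
exists f; split => //; split => //.
rewrite /Linf_norm.
have -> : f = ((c 0%N \- (c 0%N \- f)))%R.
  by apply/funext => x /=; rewrite opprB addrC subrK.
apply: le_lt_trans (Ldist_le _ _) _.
rewrite lte_add_pinfty //; first exact: (Lc 0%N).2.
by apply: le_lt_trans (fd 0%N) _; rewrite ltry.
Qed.

End L.
Lemma baire_step (V : Type) (R : realType) (X : set V) (d : V -> V -> \bar R)
  (lam : R) (P : set V) :
  (forall x y, X x -> X y -> d x y = (fine (d x y))%:E) ->
  (forall x, X x -> d x x = 0%E) ->
  (forall x y z, X x -> X y -> X z -> (d x z <= d x y + d y z)%E) ->
  0 < lam -> lam_porous X d lam P ->
  forall c r, X c -> 0 < r -> exists c' r', [/\ X c', 0 < r', r' <= r / 2,
    (fine (d c c') + r' <= r) &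
    forall z, X z -> (d c' z <= r'%:E)%E -> ~ P z].
Proof.
move=> dE d0 dtri lam0 [PX Ppor] c r Xc r0.
have [[x [Px dcx]]|] := pselect (exists x, P x /\ (d c x < (r/2)%:E)%E).
  have Xx := PX _ Px.
  move: dcx; rewrite (dE _ _ Xc Xx) lte_fin => dcx.
  have hd : 0 < r / 2 - fine (d c x) by rewrite subr_gt0.
  have [y [Xy [dxy0 [dxy hb]]]] := Ppor x Px _ hd.
  move: dxy0 dxy hb; rewrite (dE _ _ Xx Xy) !lte_fin => dxy0 dxy hb.
  have tri := dtri _ _ _ Xc Xx Xy.
  rewrite (dE _ _ Xc Xx) (dE _ _ Xx Xy) (dE _ _ Xc Xy) -EFinD lee_fin in tri.
  exists y, (minr (lam * fine (d x y) / 2) (r / 2)); split => //.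
  - rewrite lt_min; apply/andP; split; last by rewrite divr_gt0.
    by rewrite divr_gt0 // mulr_gt0.
  - by rewrite ge_min lexx orbT.
  - have : minr (lam * fine (d x y) / 2) (r / 2) <= r / 2 by rewrite ge_min lexx orbT.
    lra.
  move=> z Xz dyz Pz; apply: (hb z Xz _ Pz).
  rewrite (dE _ _ Xy Xz) lte_fin; rewrite (dE _ _ Xy Xz) lee_fin in dyz.
  apply: (le_lt_trans dyz); apply: (le_lt_trans (y := lam * fine (d x y) / 2)).
    by rewrite ge_min lexx.
  have : 0 < lam * fine (d x y) by rewrite mulr_gt0.
  lra.
move=> hno; exists c, (r / 4); split => //.
- by rewrite divr_gt0.
- lra.
- rewrite d0 //=; lra.
move=> z Xz dcz Pz; apply: hno; exists z; split => //.
apply: (le_lt_trans dcz); rewrite lte_fin; lra.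
Qed.

Definition bseq (V : Type) (R : Type) (g : nat * V * R -> V * R) (p0 : V * R) :
  nat -> V * R :=
  fix s n := match n with 0 => p0 | n.+1 => g (n, (s n).1, (s n).2) end.

Lemma baire_not_porous (V : Type) (R : realType) (X : set V)
  (d : V -> V -> \bar R) (E : set V) (x0 : V) (rho : R) :
  (forall x y, X x -> X y -> d x y = (fine (d x y))%:E) ->
  (forall x, X x -> d x x = 0%E) ->
  (forall x y z, X x -> X y -> X z -> (d x z <= d x y + d y z)%E) ->
  (forall (c : nat -> V) (r : nat -> R), (forall i, X (c i)) ->
     (forall i, 0 < r i) -> (forall e, 0 < e -> exists i, r i < e) ->
     (forall i j, (i <= j)%N -> (d (c i) (c j) <= (r i)%:E)%E) ->
     exists f, X f /\ forall i, (d (c i) f <= (r i)%:E)%E) ->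
  X x0 -> 0 < rho -> (forall z, X z -> (d x0 z < rho%:E)%E -> E z) ->
  ~ sigma_porous X d E.
Proof.
move=> dE d0 dtri Hcomp Xx0 rho0 hball [lam [/andP[lam0 lam1] [Es [Espor EE]]]].
have step := fun i : nat => @baire_step V R X d lam (Es i) dE d0 dtri lam0 (Espor i).
have : forall p : nat * V * R, exists q : V * R, X p.1.2 -> 0 < p.2 ->
  [/\ X q.1, 0 < q.2, q.2 <= p.2 / 2, fine (d p.1.2 q.1) + q.2 <= p.2 &
   forall z, X z -> (d q.1 z <= q.2%:E)%E -> ~ Es p.1.1 z].
  move=> [[i c] r] /=.
  have [[Xc r0]|hn] := pselect (X c /\ 0 < r).
    have [c' [r' H]] := step i c r Xc r0.
    by exists (c', r').
  by exists (c, r) => Xc r0; exfalso; apply: hn.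
move=> /choice [g Hg].
pose s := @bseq V R g (x0, rho / 2).
pose c n := (s n).1; pose r n := (s n).2.
have inv : forall n, X (c n) /\ 0 < r n.
  elim=> [|n [IH1 IH2]]; first by split => //; rewrite /r /= divr_gt0.
  by have [] := Hg (n, c n, r n) IH1 IH2.
have Hs n : [/\ X (c n.+1), 0 < r n.+1, r n.+1 <= r n / 2,
    fine (d (c n) (c n.+1)) + r n.+1 <= r n &
    forall z, X z -> (d (c n.+1) z <= (r n.+1)%:E)%E -> ~ Es n z].
  by have [I1 I2] := inv n; exact: (Hg (n, c n, r n) I1 I2).
have rdec n : r n * n.+1%:R <= rho / 2.
  elim: n => [|n IH]; first by rewrite mulr1 /r /=.
  have [_ _ h _ _] := Hs n; have [_ h0] := inv n.+1; have [_ h1] := inv n.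
  apply: le_trans IH.
  have E1 : (n.+2%:R : R) = n%:R + 1 + 1 by rewrite -addn2 natrD addrA.
  have E2 : (n.+1%:R : R) = n%:R + 1 by rewrite -addn1 natrD.
  rewrite E1 E2.
  have hn : (0 <= n%:R :> R) by [].
  have e1 : r n.+1 * (n%:R+1+1) <= r n / 2 * (n%:R+1+1) by apply: ler_wpM2r => //; lra.
  have e2 : 0 <= r n * n%:R by rewrite mulr_ge0 // ltW.
  nra.
have rcv : forall e, 0 < e -> exists i, r i < e.
  move=> e e0; exists (truncn (rho / 2 / e)); set n := truncn _.
  have h1 := truncnS_gt (rho / 2 / e).
  have h2 := rdec n; have [_ h3] := inv n.
  rewrite -/n in h1.
  have : rho / 2 < e * n.+1%:R by rewrite -ltr_pdivrMl // mulrC.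
  nra.
have dij : forall i k, fine (d (c i) (c (i + k)%N)) + r (i + k)%N <= r i.
  move=> i; elim=> [|k IH].
    rewrite addn0 d0; last exact: (inv i).1.
    by rewrite /= add0r.
  have [X1 _ _ h _] := Hs (i + k)%N.
  have t := dtri _ _ _ (inv i).1 (inv (i + k)%N).1 X1.
  rewrite (dE _ _ (inv i).1 (inv (i + k)%N).1) (dE _ _ (inv (i+k)%N).1 X1)
    (dE _ _ (inv i).1 X1) -EFinD lee_fin in t.
  rewrite addnS; lra.
have [f [Xf hf]] : exists f, X f /\ forall i, (d (c i) f <= (r i)%:E)%E.
  apply: Hcomp => //; first by move=> i; exact: (inv i).1.
    by move=> i; exact: (inv i).2.
  move=> i j /subnKC <-; set k := (j - i)%N.
  have := dij i k; have [_ h] := inv (i + k)%N.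
  rewrite (dE _ _ (inv i).1 (inv (i + k)%N).1) lee_fin; lra.
have : E f.
  apply: hball => //; apply: le_lt_trans (hf 0%N) _.
  rewrite lte_fin /r /=; lra.
rewrite EE => -[i _ Ei].
by have [_ _ _ _ h] := Hs i; apply: (h f Xf (hf i.+1)).
Qed.

Lemma iter_cancel (U : Type) (a ai : U -> U) : cancel ai a ->
  forall n t, iter n a (iter n ai t) = t.
Proof.
move=> can; elim=> [//|n IH] t.
by rewrite iterSr /= can IH.
Qed.

Lemma iter_wcomp (R : realType) (U : Type) (w : U -> R) (a ai : U -> U) :
  cancel ai a -> forall n g t,
  iter n (wcomp a w) g (iter n ai t) =
  (\prod_(1 <= k < n.+1) w (iter k ai t)) * g t.
Proof.
move=> can; elim=> [|n IH] g t.
  by rewrite big_geq // mul1r.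
rewrite big_nat_recr //= /wcomp can IH.
by rewrite mulrA [X in X * g t]mulrC.
Qed.

Lemma iter_wcomp_meas (R : realType) (T : ptopologicalType)
  (w : borelT T -> R) (a : borelT T -> borelT T) :
  measurable_fun setT w -> measurable_fun setT a ->
  forall n g, measurable_fun setT g -> measurable_fun setT (iter n (wcomp a w) g).
Proof.
move=> mw ma; elim=> [//|n IH] g mg /=.
apply: measurable_realfun.measurable_funM => //.
exact: measurableT_comp (IH g mg) ma.
Qed.

Lemma iter_inv_norm (R : realType) (T : ptopologicalType)
  (mu : {measure set (borelT T) -> \bar R}) (ai : borelT T -> borelT T) :
  measurable_fun setT ai ->
  (forall f, Linf mu f -> Linf_norm mu (f \o ai) = Linf_norm mu f) ->
  forall n h, Linf mu h ->
    Linf mu (h \o iter n ai) /\ Linf_norm mu (h \o iter n ai) = Linf_norm mu h.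
Proof.
move=> mai hn; elim=> [|n IH] h Lh; first by split.
have Lh' : Linf mu (h \o ai).
  split; first exact: measurableT_comp Lh.1 mai.
  by rewrite hn //; exact: Lh.2.
have [L1 L2] := IH _ Lh'.
have -> : h \o iter n.+1 ai = (h \o ai) \o iter n ai.
  by apply/funext => x /=.
by split => //; rewrite L2 hn.
Qed.

Theorem theorem3p17 (R : realType) (T : ptopologicalType)
  (mu : {measure set (borelT T) -> \bar R})
  (w : borelT T -> R) (alpha alphainv : borelT T -> borelT T)
  (F : set (borelT T)) (N : nat) :
  hausdorff_space T ->
  locally_compact [set: T] ->
  radon_measure mu ->
  measurable_fun setT w ->
  (forall x, 0 < w x) ->
  (exists M : R, forall x, `|w x| <= M) ->
  cancel alpha alphainv -> cancel alphainv alpha ->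
  measurable_fun setT alpha -> measurable_fun setT alphainv ->
  (forall f, Linf mu f ->
     Linf_norm mu (f \o alpha) = Linf_norm mu f /\
     Linf_norm mu (f \o alphainv) = Linf_norm mu f) ->
  measurable F ->
  (0 < mu F)%E -> (mu F < +oo)%E ->
  (0 < N)%N ->
  (forall n, (N <= n)%N -> iter n alpha @` F `&` F = set0) ->
  ereal_inf [set y | exists n t, [/\ (N <= n)%N, F t &
      y = (\prod_(1 <= k < n.+1) w (iter k alphainv t))%:E]] != 0%E ->
  ~ sigma_porous (Linf mu) (Linf_dist mu)
      [set f | Linf mu f /\
         forall n, (N <= n)%N ->
           (1 <= Linf_dist mu (iter n (wcomp alpha w) f) (\1_F))%E].
Proof.
move=> _ _ _ mw wpos _ can1 can2 malpha mainv hnorm mF F0 _ _ disj beta.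
have mu0 : (0 < mu setT)%E.
  by apply: lt_le_trans F0 _; apply: le_measure; rewrite ?inE.
set S := (X in ereal_inf X) in beta.
have Spos : forall n t, (0 < \prod_(1 <= k < n.+1) w (iter k alphainv t)).
  by move=> n t; apply: prodr_gt0 => k _.
have [b [b0 hb]] : exists b, 0 < b /\ forall n t, (N <= n)%N -> F t ->
    b <= \prod_(1 <= k < n.+1) w (iter k alphainv t).
  have inf0 : (0 <= ereal_inf S)%E.
    apply/ereal_infP => y [n [t [_ _ ->]]].
    by rewrite lee_fin ltW.
  have infS n t : (N <= n)%N -> F t ->
      (ereal_inf S <= (\prod_(1 <= k < n.+1) w (iter k alphainv t))%:E)%E.
    by move=> Nn Ft; apply: ereal_inf_lbound; exists n, t.
  move: inf0 beta infS; case: (ereal_inf S) => [r| |] //.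
  - rewrite lee_fin => r0 rn0 infS; exists r; split.
      by rewrite lt_neqAle eq_sym r0 andbT; apply: contra rn0 => /eqP ->.
    by move=> n t Nn Ft; rewrite -lee_fin; apply: infS.
  - move=> _ _ infS; exists 1; split => // n t Nn Ft.
    by have := infS n t Nn Ft.
set c := b^-1 + 1.
set f0 : borelT T -> R := fun x => c * \1_F x.
have mind : measurable_fun setT (\1_F : borelT T -> R).
  exact: measurable_realfun.measurable_indic.
have Lf0 : Linf mu f0.
  split.
    exact: (@measurable_realfun.measurable_funM _ _ _ _ (cst c) \1_F).
  apply: (@le_lt_trans _ _ (`|c|)%:E); last by rewrite ltry.
  apply: ess_sup_ler => t /=; rewrite lee_fin normrM ler_piMr //.
  by rewrite indicE; case: (_ \in _); rewrite ?normr1 ?normr0.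
apply: (@baire_not_porous _ R (Linf mu) (Linf_dist mu) _ f0 1).
- by move=> x y Xx Xy; apply: Ldist_fin.
- by move=> x _; apply: Ldist0.
- by move=> x y z _ _ _; apply: Ldist_tri.
- by move=> cc r Lc r0 rcv dij; apply: Linf_complete.
- exact: Lf0.
- by [].
move=> g Lg dg; split => // n Nn.
set h := (iter n (wcomp alpha w) g \- \1_F).
rewrite /Linf_dist -/h.
have [hinf|hfin] := eqVneq (Linf_norm mu h) +oo%E; first by rewrite hinf leey.
have Lh : Linf mu h.
  split; last by rewrite lt_neqAle hfin leey.
  apply: measurable_realfun.measurable_funB => //.
  exact: iter_wcomp_meas Lg.1.
have [_ <-] := @iter_inv_norm R T mu alphainv mainv (fun f Lf => (hnorm f Lf).2) n h Lh.
rewrite leNgt; apply/negP => hlt.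
have ae1 := ess_sup_ge mu (EFin \o (normr \o (h \o iter n alphainv))).
have /ess_supP ae2 := lexx (Linf_dist mu f0 g).
have : \forall x \ae mu, ~ F x.
  apply: filterS2 ae1 ae2 => x h1 h2 Fx.
  move: h1 h2 => /=.
  rewrite /h /= iter_wcomp //.
  have Fn : ~ F (iter n alphainv x).
    move=> Fi; have : (iter n alpha @` F `&` F) x.
      split => //; exists (iter n alphainv x) => //.
      exact: iter_cancel.
    by rewrite disj.
  rewrite indicE memNset // subr0.
  rewrite /f0 indicE mem_set // mulr1.
  move=> h1 h2.
  have h3 := le_lt_trans h1 hlt.
  have h4 := le_lt_trans h2 dg.
  rewrite lte_fin in h3; rewrite lte_fin in h4.
  have hp := hb n x Nn Fx; have hp0 := Spos n x.
  set P := \prod_(1 <= k < n.+1) _ in h3 hp hp0.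
  move: h4; rewrite ltr_norml => /andP[_ h4].
  have gx : b^-1 < g x by rewrite /c in h4; lra.
  have : 1 <= P * g x.
    have -> : 1 = b * b^-1 by rewrite mulfV // gt_eqF.
    apply: (@le_trans _ _ (P * b^-1)).
      by apply: ler_wpM2r => //; rewrite invr_ge0 ltW.
    by apply: ler_wpM2l; rewrite ?ltW.
  move: h3; rewrite ger0_norm; first lra.
  by apply: mulr_ge0; rewrite ltW //; apply: lt_trans gx; rewrite invr_gt0.
move=> hF.
have : mu F = 0%E.
  apply: (measure_negligible mF).
  by apply: negligibleS hF => x Fx /=; apply.
by move=> F0'; move: F0; rewrite F0' ltxx.
Qed.
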